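(* Let $h$ and $a$ be positive integers and let $k = a^2$. Then $\left((a-1)h+1\right)^2 \in \mathcal{R}_{\mathbf{Z}}(h,k)$.
   Context: For a positive integer $h$ and a finite set $A$ of integers, $hA$ denotes the set of all sums $a_1+\cdots+a_h$ with $a_1,\ldots,a_h \in A$ (not necessarily distinct). The sumset size set is $\mathcal{R}_{\mathbf{Z}}(h,k) = \{ |hA| : A \subseteq \mathbf{Z},\ |A| = k\}$. *)

(* Defs.v *)
From HB Require Import structures.
From mathcomp Require Import all_boot all_order all_algebra.
From mathcomp Require Import finmap.
Set Implicit Arguments. Unset Strict Implicit. Unset Printing Implicit Defensive.
Import Order.TTheory GRing.Theory Num.Theory.
Local Open Scope fset_scope.
Local Open Scope ring_scope.

Definition sumset (A B : {fset int}) : {fset int} :=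
  [fset (a + b)%R | a in A, b in B].

(* h-fold sumset hA = {a_1 + ... + a_h : a_i in A}, for h >= 1:
   1A = A and (h+1)A = A + hA.  (h = 0 is not used; it gives A.) *)
Fixpoint hfold (h : nat) (A : {fset int}) : {fset int} :=
  match h with
  | 0%N | 1%N => A
  | h'.+1 => sumset A (hfold h' A)
  end.

Definition in_RZ (h k n : nat) : Prop :=
  exists A : {fset int}, #|` A| = k /\ #|` hfold h A| = n.

(* Main.v *)
Require Import Defs.
From mathcomp Require Import all_boot all_order all_algebra.
From mathcomp Require Import finmap zify.
Set Warnings "-notation-overridden -notation-incompatible-prefix -ambiguous-paths".
Import GRing.Theory Num.Theory.
Local Open Scope ring_scope.
Local Open Scope nat_scope.


Lemma size_enum_iota (M : nat) : size (enum_finmem (mem (iota 0 M))) = M.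
Proof.
have H : perm_eq (enum_finmem (mem (iota 0 M))) (iota 0 M).
  apply: uniq_perm; [exact: enum_finmem_uniq| exact: iota_uniq|].
  by move=> x; rewrite enum_finmemE.
by rewrite (perm_size H) size_iota.
Qed.

Lemma divmod_uniq (N x1 y1 x2 y2 : nat) : (x1 < N)%N -> (x2 < N)%N ->
  x1 + N * y1 = x2 + N * y2 -> x1 = x2 /\ y1 = y2.
Proof.
move=> h1 h2 e.
have N0 : (0 < N)%N by lia.
have E1 : (x1 + N*y1) %/ N = y1 by rewrite mulnC addnC divnMDl // divn_small // addn0.
have E2 : (x1 + N*y1) %% N = x1 by rewrite mulnC addnC modnMDl modn_small.
have E3 : (x2 + N*y2) %/ N = y2 by rewrite mulnC addnC divnMDl // divn_small // addn0.
have E4 : (x2 + N*y2) %% N = x2 by rewrite mulnC addnC modnMDl modn_small.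
split; [by rewrite -E2 -E4 e | by rewrite -E1 -E3 e].
Qed.

Section S.
Variables (a N : nat).
Hypothesis a0 : (0 < a)%N.
Hypothesis aN : (a <= N)%N.

Definition f (n : nat) : int := ((n %% a) + N * (n %/ a))%:Z.
Definition A : {fset int} := [fset f n | n in iota 0 (a*a)]%fset.

Lemma memA z : z \in A <-> exists x y, (x < a)%N /\ (y < a)%N /\ z = (x + N*y)%:Z.
Proof.
split.
  move=> /imfsetP [n /= nin ->]. rewrite mem_iota in nin.
  exists (n %% a), (n %/ a); split; first by rewrite ltn_mod.
  by split => //; rewrite ltn_divLR //; lia.
move=> [x [y [xa [ya ->]]]]. apply/imfsetP; exists (x + a*y) => /=.
  rewrite mem_iota; nia.
rewrite /f; congr Posz.
apply/esym; rewrite (addnC x) (mulnC a y) modnMDl modn_small // divnMDl // divn_small // addn0.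
by rewrite addnC.
Qed.

Lemma cardA : (#|` A|)%fset = (a ^ 2)%N.
Proof.
rewrite card_in_imfset ?size_enum_iota; first by rewrite expnS expn1.
move=> m n; rewrite /= !mem_iota /f => hm hn [] e.
have lm : m %% a < N by apply: leq_trans (ltn_pmod _ a0) aN.
have ln : n %% a < N by apply: leq_trans (ltn_pmod _ a0) aN.
have [e1 e2] := @divmod_uniq N _ _ _ _ lm ln e.
by rewrite (divn_eq m a) (divn_eq n a) e1 e2.
Qed.

Definition P j (z : int) := exists x y, x <= j*(a-1) /\ y <= j*(a-1) /\ z = (x + N*y)%:Z.

Lemma memS (B : {fset int}) z : z \in sumset A B <-> exists u v, u \in A /\ v \in B /\ z = (u + v)%R.
Proof.
split.
  by move=> /imfset2P [u uA [v vB ->]]; exists u, v.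
by move=> [u [v [uA [vB ->]]]]; apply/imfset2P; exists u => //; exists v.
Qed.

Lemma memH j z : 0 < j -> (z \in hfold j A <-> P j z).
Proof.
elim: j z => [//|j IH] z _.
case: j IH => [|j] IH.
  rewrite /= memA /P; split => -[x [y [hx [hy ->]]]]; exists x, y; lia.
change (hfold j.+2 A) with (sumset A (hfold j.+1 A)).
rewrite memS; split.
  move=> [u [v [/memA [x1 [y1 [h1 [h2 ->]]]] [/IH [//|x2 [y2 [h3 [h4 ->]]]] ->]]]].
  exists (x1 + x2), (y1 + y2); split; first nia. split; first nia.
  by rewrite -PoszD; congr Posz; lia.
move=> [x [y [hx [hy ->]]]].
exists (minn x (a-1) + N * minn y (a-1))%:Z, ((x - minn x (a-1)) + N * (y - minn y (a-1)))%:Z.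
split; first by apply/memA; exists (minn x (a-1)), (minn y (a-1)); lia.
split; first by apply/IH => //; exists (x - minn x (a-1)), (y - minn y (a-1)); nia.
by rewrite -PoszD; congr Posz; nia.
Qed.
End S.


Theorem mainTheorem5 (h a : nat) :
  (0 < h)%N -> (0 < a)%N ->
  in_RZ h (a ^ 2) (((a - 1) * h + 1) ^ 2).
Proof.
move=> h0 a0.
set N := (a - 1) * h + 1.
have aN : a <= N by rewrite /N; nia.
exists (A a N); split; first exact: cardA.
have -> : hfold h (A a N) = [fset (n%:Z : int) | n in iota 0 (N*N)]%fset.
  apply/fsetP => z; apply/idP/idP.
    move=> /(proj1 (@memH a N a0 aN h z h0)) [x [y [hx [hy ->]]]].
    apply/imfsetP; exists (x + N*y) => //=; rewrite mem_iota; nia.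
  move=> /imfsetP [n /=]; rewrite mem_iota => hn ->.
  have N0 : 0 < N by lia.
  apply: (proj2 (@memH a N a0 aN h _ h0)); exists (n %% N), (n %/ N); split.
    have := ltn_pmod n N0; rewrite /N; lia.
  split.
    have : n %/ N < N by rewrite ltn_divLR //; lia.
    rewrite /N; lia.
  by congr Posz; rewrite {1}(divn_eq n N); lia.
rewrite card_imfset ?size_enum_iota; first by rewrite expnS expn1.
by move=> x y [].
Qed.
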